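(* Let $n\ge2$, $f:\mathbb{R}^n\to\mathbb{R}^n$ continuously differentiable, $b_0\in\mathbb{R}^n_{\ge0}$, $\mu,\theta>0$, $r:=\mu/\theta$, and let $x^*\in\mathbb{R}^n_{\ge0}$, $u_*>0$ satisfy $x^*_n=r$ and $f(x^* )-u_*re_n+b_0=0$. Let $J:=\partial f/\partial x(x^* )$ with blocks $J_{12}:=S^TJe_n$, $J_{21}:=e_n^TJS$. Assume $J$ is Hurwitz stable and that $J_{12}=0$ or $J_{21}=0$. Then for all $\eta,k_p>0$ the equilibrium $\big(x^*,\ \mu/(\eta u_* ),\ u_*/k_p\big)$ of $\dot x=f(x)-k_px_nz_2e_n+b_0$, $\dot z_1=\mu-\eta k_pz_1z_2$, $\dot z_2=\theta x_n-\eta k_pz_1z_2$ is locally exponentially stable.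
   Context: $S:=[e_1\ \cdots\ e_{n-1}]$, $e_i$ standard basis vectors; $x_n=e_n^Tx$. Hurwitz stable: all eigenvalues have negative real part. An equilibrium is called locally exponentially stable here if the Jacobian matrix of the vector field at the equilibrium is Hurwitz stable. *)

(* Defs.v *)
From HB Require Import structures.
From mathcomp Require Import all_boot all_order all_algebra.
From mathcomp Require Import all_classical all_reals all_analysis.
From mathcomp Require Import complex.
Set Implicit Arguments. Unset Strict Implicit. Unset Printing Implicit Defensive.
Import Order.TTheory GRing.Theory Num.Theory.
Import numFieldNormedType.Exports.
Local Open Scope ring_scope.

Section Defs.
Variable R : realType.

(* standard basis vector e_n of R^n (column vector); zero vector if n = 0 *)
Definition ecol (n : nat) : 'cV[R]_n := \col_(i < n) (i.+1 == n)%:R.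

(* S := [e_1 ... e_{n-1}]  (an n x (n-1) matrix) *)
Definition Smx (n : nat) : 'M[R]_(n, n.-1) :=
  \matrix_(i < n, j < n.-1) (i == j :> nat)%:R.

(* x_n := e_n^T x, for a state x stored as a row vector *)
Definition xlast (n : nat) (x : 'rV[R]_n) : R := (x *m ecol n) 0 0.

(* Jacobian matrix in the paper's convention: J i j = d f_i / d x_j (x).
   The library's 'J f x = lin1_mx ('d f x) acts on row vectors and is the
   transpose of this. *)
Definition jac (n m : nat) (f : 'rV[R]_n -> 'rV[R]_m) (x : 'rV[R]_n)
  : 'M[R]_(m, n) := ('J f x)^T.

Definition C1 (n m : nat) (f : 'rV[R]_n -> 'rV[R]_m) : Prop :=
  (forall x, differentiable f x) /\
  (forall j : 'I_n, continuous (fun x => 'D_(delta_mx 0 j) f x)).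

Definition hurwitz (n : nat) (A : 'M[R]_n) : Prop :=
  forall z : R[i], eigenvalue (map_mx (real_complex R) A) z -> Re z < 0.

Definition closed_loop (n : nat) (f : 'rV[R]_n -> 'rV[R]_n) (b0 : 'rV[R]_n)
  (mu theta eta kp : R) (w : 'rV[R]_(n + 2)) : 'rV[R]_(n + 2) :=
  let x := lsubmx w in
  let z1 := rsubmx w 0 0 in
  let z2 := rsubmx w 0 1 in
  row_mx (f x - (kp * xlast x * z2) *: (ecol n)^T + b0)
         (\row_(i < 2) nth 0 [:: mu - eta * kp * z1 * z2;
                                 theta * xlast x - eta * kp * z1 * z2] i).

End Defs.

(* Main.v *)
Require Import Defs.
From HB Require Import structures.
From mathcomp Require Import all_boot all_order all_algebra.
From mathcomp Require Import all_classical all_reals all_analysis.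
From mathcomp Require Import complex ring lra zify.
Import Order.TTheory GRing.Theory Num.Theory.
Import numFieldNormedType.Exports.
Local Open Scope ring_scope.
Set Implicit Arguments. Unset Strict Implicit. Unset Printing Implicit Defensive.

Lemma NumRe (R : rcfType) (z : R[i]) : Num.Theory.Re z = (complex.Re z)%:C%C.
Proof. by rewrite ReJ_add /Num.Theory.Re unlock. Qed.
Lemma NumRe_lt0 (R : rcfType) (z : R[i]) : (Num.Theory.Re z < 0) = (complex.Re z < 0).
Proof. by rewrite NumRe ltcE /= eqxx. Qed.

Lemma eigen_det (F : fieldType) n (g : 'M[F]_n) a :
  eigenvalue g a = (\det (g - a%:M) == 0).
Proof.
by rewrite /eigenvalue /eigenspace kermx_eq0 row_free_unit unitmxE unitfE negbK.
Qed.

Lemma det3 (F : comNzRingType) (A : 'M[F]_3) : \det A =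
  A 0 0 * (A 1 1 * A 2 2 - A 1 2 * A 2 1)
  - A 0 1 * (A 1 0 * A 2 2 - A 1 2 * A 2 0)
  + A 0 2 * (A 1 0 * A 2 1 - A 1 1 * A 2 0).
Proof.
rewrite (expand_det_row _ 0) !big_ord_recl big_ord0 addr0 /cofactor.
rewrite !(expand_det_row _ 0) !big_ord_recl !big_ord0 !addr0 /cofactor.
rewrite !det_mx11 !mxE /=.
pose B := fun p q : nat => A (inord p) (inord q).
have E : forall i j : 'I_3, A i j = B i j by move=> i j; rewrite /B !inord_val.
rewrite !E /= /B.
rewrite !expr0 !expr1. ring.
Qed.

Lemma cubic_re (R : rcfType) (a c k th d : R) (z : R[i]) :
  0 < a -> 0 < c -> 0 < k -> 0 < th -> 0 < d ->
  (z + d%:C%C) * (z * z + (a + c)%:C%C * z) + (th * k)%:C%C * (z + a%:C%C) = 0 ->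
  complex.Re z < 0.
Proof.
move=> ha hc hk ht hd; case: z => x y /=.
rewrite /real_complex_def. simpc. case.
move=> E1 E2.
rewrite ltNge; apply/negP => hx.
have [y0|yn0] := eqVneq y 0.
  subst y.
  have h1 : 0 <= (x + d) * (x * x + (a + c) * x).
    apply: mulr_ge0; first lra. apply: addr_ge0; first nra. nra.
  have h2 : 0 < th * k * (x + a) by apply: mulr_gt0; [nra|lra].
  nra.
have E3 : y * y = 3 * x * x + 2 * (a + c + d) * x + (d * (a+c) + th * k).
  apply: (mulfI yn0). nra.
have E1' : (x + d) * (x * x - y * y + (a + c) * x) - y * y * (2 * x + (a + c))
   + th * k * (x + a) = 0 by rewrite -E1; ring.
rewrite E3 in E1'.
have h4 : 0 <= x * x * x by rewrite -mulrA; apply: mulr_ge0 => //; nra.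
have h5 : 0 <= x * x by nra.
have h6 : 0 <= x * (a + c + d) * (a + c + d) by apply: mulr_ge0; nra.
have h7 : 0 <= x * (d * (a + c) + th * k) by apply: mulr_ge0 => //; nra.
have h8 : 0 <= x * x * (a + c + d) by apply: mulr_ge0 => //; nra.
have h9 : th * k * a < (a + c + d) * (d * (a + c) + th * k).
  have : 0 < th * k * (c + d) by apply: mulr_gt0; nra.
  have : 0 < (a + c + d) * (d * (a + c)) by apply: mulr_gt0; nra.
  nra.
nra.
Qed.

Section Alg.
Variable R : realType.

Definition hz n (B : 'M[R]_n) := forall z : R[i],
  \det (map_mx (real_complex R) B - z%:M) = 0 -> complex.Re z < 0.

Lemma hurwitzE n (B : 'M[R]_n) : hurwitz B^T <-> hz B.
Proof.
have E : forall z : R[i], \det (map_mx (real_complex R) B^T - z%:M) =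
   \det (map_mx (real_complex R) B - z%:M).
  move=> z; rewrite -map_trmx -[RHS]det_tr; congr (\det _).
  by apply/matrixP => i j; rewrite !mxE eq_sym.
split=> H z.
  by move=> hd; rewrite -NumRe_lt0; apply: H; rewrite eigen_det E hd.
by rewrite eigen_det E NumRe_lt0 => /eqP; apply: H.
Qed.


Definition Aur m (th : R) : 'M[R]_(m.+1, 2) :=
  \matrix_(k, l) (((k == ord_max) && (l == 1))%:R * th).
Definition Adl m (kk : R) : 'M[R]_(2, m.+1) :=
  \matrix_(l, k) (((l == 1) && (k == ord_max))%:R * - kk).
Definition Adr (a c : R) : 'M[R]_2 :=
  \matrix_(l, l') (if l == 0 then - a else - c).

Lemma det_castmx (F : comNzRingType) n n' (e : n = n') (A : 'M[F]_n) :
  \det (castmx (e, e) A) = \det A.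
Proof. by case: n' / e A => A; rewrite castmx_id. Qed.

Lemma det_btrig (F : comNzRingType) n1 n2 (A : 'M[F]_(n1 + n2)) :
  ursubmx A = 0 \/ dlsubmx A = 0 -> \det A = \det (ulsubmx A) * \det (drsubmx A).
Proof.
by move=> h; rewrite -{1}[A]submxK; case: h => ->; [rewrite det_lblock | rewrite det_ublock].
Qed.

Lemma spectral m (Jf : 'M[R]_(m.+1)) (p0 th kk a c : R) :
  0 < p0 -> 0 < th -> 0 < kk -> 0 < a -> 0 < c ->
  hz Jf ->
  (forall i : 'I_m.+1, i != ord_max -> Jf i ord_max = 0) \/
  (forall j : 'I_m.+1, j != ord_max -> Jf ord_max j = 0) ->
  hz (block_mx (Jf - p0 *: delta_mx ord_max ord_max) (Aur m th) (Adl m kk) (Adr a c)).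
Proof.
move=> hp0 hth hkk ha hc hJ hblk z.
set cR := real_complex R.
have e : (m.+1 + 2 = m + 3)%N := addSnnS m 2.
have ef : (m.+1 = m + 1)%N := esym (addn1 m).
have cL (i : 'I_m) : cast_ord (esym e) (lshift 3 i) = lshift 2 (widen_ord (leqnSn m) i).
  exact: val_inj.
have c0 : cast_ord (esym e) (rshift m (0 : 'I_3)) = lshift 2 ord_max.
  by apply: val_inj => /=; rewrite addn0.
have c1 : cast_ord (esym e) (rshift m (1 : 'I_3)) = rshift m.+1 (0 : 'I_2).
  by apply: val_inj => /=; lia.
have c2 : cast_ord (esym e) (rshift m (2 : 'I_3)) = rshift m.+1 (1 : 'I_2).
  by apply: val_inj => /=; lia.
have fL (i : 'I_m) : cast_ord (esym ef) (lshift 1 i) = widen_ord (leqnSn m) i.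
  exact: val_inj.
have f0 : cast_ord (esym ef) (rshift m (0 : 'I_1)) = ord_max.
  by apply: val_inj => /=; rewrite addn0.
have wneq (i : 'I_m) : (widen_ord (leqnSn m) i == ord_max) = false.
  by apply/negbTE; rewrite -val_eqE /= neq_ltn ltn_ord.
have keyf : forall w : R[i],
    \det (map_mx cR Jf - w%:M) =
    \det (ulsubmx (castmx (ef, ef) (map_mx cR Jf - w%:M))) * (cR (Jf ord_max ord_max) - w).
  move=> w; rewrite -[LHS](det_castmx ef) det_btrig; last first.
    case: hblk => hb; [left|right]; apply/matrixP => i j;
    rewrite !mxE castmxE /= ?ord1 ?fL ?f0 !mxE ?[ord_max == _]eq_sym wneq hb
      ?wneq //= /cR rmorph0 mulr0n subr0.
  1,2: by [].
  by congr (_ * _); rewrite det_mx11 !mxE castmxE /= ?ord1 f0 !mxE eqxx mulr1n.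
have Ment n (N : 'M[R]_n) i j : (map_mx cR N - z%:M) i j = cR (N i j) - z *+ (i == j).
  by rewrite !mxE.
set B := block_mx _ _ _ _.
set M := map_mx cR B - z%:M.
have hLL k k' : M (lshift 2 k) (lshift 2 k') =
    cR (Jf k k' - p0 * ((k == ord_max) && (k' == ord_max))%:R) - z *+ (k == k').
  by rewrite /M Ment /B block_mxEul !mxE eq_lshift.
have hLR k l : M (lshift 2 k) (rshift m.+1 l) = cR (((k == ord_max) && (l == 1))%:R * th).
  by rewrite /M Ment /B block_mxEur !mxE eq_lrshift mulr0n subr0.
have hRL l k : M (rshift m.+1 l) (lshift 2 k) = cR (((l == 1) && (k == ord_max))%:R * - kk).
  by rewrite /M Ment /B block_mxEdl !mxE eq_rlshift mulr0n subr0.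
have hRR l l' : M (rshift m.+1 l) (rshift m.+1 l') =
    cR (if l == 0 then - a else - c) - z *+ (l == l').
  by rewrite /M Ment /B block_mxEdr !mxE eq_rshift.
have j3 : forall j : 'I_3, j = 0 \/ j = 1 \/ j = 2.
  by case => [[|[|[|//]]]] hj; [left|right;left|right;right]; apply: val_inj.
have kM : \det M = \det (ulsubmx (castmx (e,e) M)) * \det (drsubmx (castmx (e,e) M)).
  rewrite -[LHS](det_castmx e) det_btrig //.
  case: hblk => hb; [left|right]; apply/matrixP => i j; rewrite !mxE castmxE /= cL.
    case: (j3 j) => [->|[->|->]]; rewrite ?c0 ?c1 ?c2 ?hLL ?hLR /= ?hb ?wneq //=;
    by rewrite /cR ?mul0r ?mulr0 ?subr0 ?mulr0n rmorph0 ?subr0 ?mulr0n.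
  case: (j3 i) => [->|[->|->]]; rewrite ?c0 ?c1 ?c2 ?hLL ?hRL /=
    ?[ord_max == _]eq_sym ?wneq ?andbF ?hb ?wneq //=.
  all: try by rewrite /cR ?mul0r ?mulr0 ?subr0 ?mulr0n rmorph0 ?subr0 ?mulr0n.
  by rewrite eq_sym wneq /cR ?mul0r ?mulr0 ?subr0 ?mulr0n rmorph0 ?subr0 ?mulr0n.
have ulE : ulsubmx (castmx (e,e) M) = ulsubmx (castmx (ef,ef) (map_mx cR Jf - z%:M)).
  apply/matrixP => i j; rewrite !mxE !castmxE /= !cL !fL hLL wneq /=.
  by rewrite !mxE ?mulr0n ?mulr0 ?subr0.
have drE : \det (drsubmx (castmx (e,e) M)) = - ((z + cR (p0 - Jf ord_max ord_max)) *
    (z * z + cR (a + c) * z) + cR (th * kk) * (z + cR a)).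
  rewrite det3 !mxE !castmxE /= !c0 !c1 !c2 !hLL !hLR !hRL !hRR !eqxx /=.
  rewrite /cR !mulr0n !mulr1n !mul0r !mul1r ?mulr1 ?rmorph0 !rmorphN !rmorphB !rmorphD !rmorphM.
  ring.
have hJm : Jf ord_max ord_max < 0.
  by have := hJ (cR (Jf ord_max ord_max)); rewrite keyf subrr mulr0 => /(_ erefl).
move=> /eqP; rewrite kM ulE drE mulf_eq0 => /orP [/eqP h|].
  by apply: hJ; rewrite keyf h mul0r.
rewrite oppr_eq0 => /eqP h.
apply: (@cubic_re R a c kk th (p0 - Jf ord_max ord_max)) => //.
  by rewrite subr_gt0; apply: lt_trans hJm hp0.
Qed.
End Alg.

Section Tools.
Context {R : numFieldType} {V W : normedModType R}.

Lemma isf_ext x (f g dg : V -> W) :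
  (forall t, f t = g t) -> is_diff x g dg -> is_diff x f dg.
Proof. by move=> h; have -> : f = g by apply/funext. Qed.

Lemma isf_eq x (f df dg : V -> W) :
  (forall t, df t = dg t) -> is_diff x f df -> is_diff x f dg.
Proof. by move=> h; have -> : dg = df by apply/funext. Qed.

Lemma isf_cst x (k : W) : is_diff x (fun _ : V => k) (fun _ => 0).
Proof. exact: is_diff_cst. Qed.

Lemma isf_add x (f g df dg : V -> W) : is_diff x f df -> is_diff x g dg ->
  is_diff x (fun t => f t + g t) (fun t => df t + dg t).
Proof. by move=> ? ?; apply: is_diffD. Qed.

Lemma isf_sub x (f g df dg : V -> W) : is_diff x f df -> is_diff x g dg ->
  is_diff x (fun t => f t - g t) (fun t => df t - dg t).
Proof. by move=> ? ?; apply: is_diffB. Qed.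

End Tools.

Section Tools2.
Context {R : numFieldType} {V : normedModType R}.

Lemma isf_mul x (f g df dg : V -> R) : is_diff x f df -> is_diff x g dg ->
  is_diff x (fun t => f t * g t) (fun t => f x * dg t + g x * df t).
Proof. by move=> ? ?; apply: is_diffM. Qed.

End Tools2.

Section Tools3.
Context {R : realType}.

Lemma isf_coord p q (x : 'M[R]_(p, q)) i j :
  is_diff x (fun t : 'M[R]_(p, q) => t i j) (fun t => t i j).
Proof.
apply: DiffDef; first exact: differentiable_coord.
apply/funext => v; rewrite -deriveE; last exact: differentiable_coord.
have := derive_mx (@derivable_id _ _ x v); rewrite derive_id => /matrixP /(_ i j).
by rewrite mxE.
Qed.

Lemma diff_entries p q r s (F : 'M[R]_(p, q) -> 'M[R]_(r, s)) x :
  (forall i j, differentiable (fun t => F t i j) x) -> differentiable F x.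
Proof.
move=> h.
have -> : F = \sum_(i < r) \sum_(j < s) (fun t => F t i j *: delta_mx i j).
  apply/funext => t; rewrite fct_sumE; under eq_bigr do rewrite fct_sumE.
  exact: matrix_sum_delta.
apply: differentiable_sum => i; apply: differentiable_sum => j.
exact: differentiableZl.
Qed.

Lemma isf_comp_lsub m n2 (f : 'rV[R]_m -> 'rV[R]_m) (w : 'rV[R]_(m + n2)) k :
  differentiable f (lsubmx w) ->
  is_diff w (fun t : 'rV[R]_(m + n2) => f (lsubmx t) 0 k)
            (fun u => (lsubmx u *m 'J f (lsubmx w)) 0 k).
Proof.
move=> df.
have dl : differentiable (f \o lsubmx) w.
  by apply: differentiable_comp => //; exact: differentiable_lsubmx.
have dc : differentiable (fun t : 'rV[R]_(m + n2) => f (lsubmx t) 0 k) w.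
  have := @differentiable_comp _ _ _ _ (f \o lsubmx) (fun M : 'rV[R]_m => M 0 k) w dl.
  by apply; exact: differentiable_coord.
apply: DiffDef => //; apply/funext => u.
rewrite -deriveE //.
have := derive_mx (@diff_derivable _ _ _ _ _ u dl) => /matrixP /(_ 0 k); rewrite mxE => <-.
rewrite deriveE // diff_comp //; last exact: differentiable_lsubmx.
rewrite /= diff_lin; last exact: continuous_lsubmx.
by rewrite -deriveE // deriveEjacobian.
Qed.
End Tools3.

Lemma zfE (R : numFieldType) (V W : normedModType R) (u : V) : (0 : V -> W) u = 0.
Proof. by []. Qed.
Ltac isf := repeat first [ exact: isf_cst | exact: isf_coord | apply: isf_mul
  | apply: isf_sub | apply: isf_add ].

Lemma sum_pick (R : realType) n (g : 'I_n -> R) i0 :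
  \sum_l g l * (l == i0)%:R = g i0.
Proof.
rewrite (bigD1 i0) //= eqxx mulr1 big1 ?addr0 // => l /negbTE ->.
by rewrite mulr0.
Qed.

Section JacCL.
Variables (R : realType) (m : nat) (f : 'rV[R]_m.+1 -> 'rV[R]_m.+1).
Variables (b0 : 'rV[R]_m.+1) (mu theta eta kp : R) (xs : 'rV[R]_m.+1) (z1 z2 : R).
Hypothesis df : differentiable f xs.
Let F := closed_loop f b0 mu theta eta kp.
Let zs : 'rV[R]_2 := \row_(i < 2) nth 0 [:: z1; z2] i.
Let w := row_mx xs zs.
Let Jf := 'J f xs.

Lemma xlastE (x : 'rV[R]_m.+1) : xlast x = x 0 ord_max.
Proof.
rewrite /xlast mxE (bigD1 ord_max) //= mxE eqxx mulr1 big1 ?addr0 // => i hi.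
rewrite mxE eqSS; suff -> : (i == m :> nat) = false by rewrite mulr0.
by apply/negbTE; move: hi; rewrite -val_eqE.
Qed.

Lemma ecolTE k : (ecol R m.+1)^T 0 k = (k == ord_max)%:R.
Proof. by rewrite !mxE eqSS -val_eqE. Qed.

Lemma FL t k : F t 0 (lshift 2 k) = f (lsubmx t) 0 k -
  kp * t 0 (lshift 2 ord_max) * t 0 (rshift m.+1 1) * (k == ord_max)%:R + b0 0 k.
Proof.
by rewrite /F /closed_loop row_mxEl !mxE xlastE !mxE eqSS -val_eqE.
Qed.

Lemma FR0 t : F t 0 (rshift m.+1 0) =
  mu - eta * kp * t 0 (rshift m.+1 0) * t 0 (rshift m.+1 1).
Proof. by rewrite /F /closed_loop row_mxEr !mxE. Qed.

Lemma FR1 t : F t 0 (rshift m.+1 1) =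
  theta * t 0 (lshift 2 ord_max) - eta * kp * t 0 (rshift m.+1 0) * t 0 (rshift m.+1 1).
Proof. by rewrite /F /closed_loop row_mxEr !mxE xlastE !mxE. Qed.

Lemma wL k : w 0 (lshift 2 k) = xs 0 k. Proof. by rewrite row_mxEl. Qed.
Lemma wR0 : w 0 (rshift m.+1 0) = z1. Proof. by rewrite row_mxEr mxE. Qed.
Lemma wR1 : w 0 (rshift m.+1 1) = z2. Proof. by rewrite row_mxEr mxE. Qed.

Lemma dFL k : is_diff w (fun t => F t 0 (lshift 2 k))
  (fun u => (lsubmx u *m Jf) 0 k
     - (kp * z2) * u 0 (lshift 2 ord_max) * (k == ord_max)%:R
     - (kp * xs 0 ord_max) * u 0 (rshift m.+1 1) * (k == ord_max)%:R).
Proof.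
eapply (@isf_eq R 'rV[R]_(m.+1 + 2) R^o w); last first.
  apply: (isf_ext (fun t => FL t k)).
  apply: isf_add.
  apply: isf_sub; first by apply: isf_comp_lsub; rewrite row_mxKl.
  by isf.
move=> u /=; rewrite wL wR1 row_mxKl !zfE.
ring.
Qed.

Lemma dFR0 : is_diff w (fun t => F t 0 (rshift m.+1 0))
  (fun u => - (eta * kp * z2) * u 0 (rshift m.+1 0) - (eta * kp * z1) * u 0 (rshift m.+1 1)).
Proof.
eapply (@isf_eq R 'rV[R]_(m.+1 + 2) R^o w); last first.
  apply: (isf_ext FR0).
  by isf.
move=> u /=; rewrite wR0 wR1 ?zfE; ring.
Qed.

Lemma dFR1 : is_diff w (fun t => F t 0 (rshift m.+1 1))
  (fun u => theta * u 0 (lshift 2 ord_max) - (eta * kp * z2) * u 0 (rshift m.+1 0)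
     - (eta * kp * z1) * u 0 (rshift m.+1 1)).
Proof.
eapply (@isf_eq R 'rV[R]_(m.+1 + 2) R^o w); last first.
  apply: (isf_ext FR1).
  by isf.
move=> u /=; rewrite wR0 wR1 ?zfE; ring.
Qed.



Let Jcl := block_mx (Jf - (kp * z2) *: delta_mx ord_max ord_max) (Aur m theta)
  (Adl m (kp * xs 0 ord_max)) (Adr (eta * kp * z2) (eta * kp * z1)).

Lemma l2 (l : 'I_2) : l = 0 \/ l = 1.
Proof. by case: l => [[|[|//]]] hl; [left|right]; apply: val_inj. Qed.

Lemma vJL (u : 'rV[R]_(m.+1 + 2)) k : (u *m Jcl) 0 (lshift 2 k) = (lsubmx u *m Jf) 0 k
   - (kp * z2) * u 0 (lshift 2 ord_max) * (k == ord_max)%:R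
   - (kp * xs 0 ord_max) * u 0 (rshift m.+1 1) * (k == ord_max)%:R.
Proof.
rewrite -{1}[u]hsubmxK mul_row_block row_mxEl mulmxBr -scalemxAr.
rewrite [X in _ = X - _ - _]mxE.
rewrite !mxE.
have E1 : \sum_j lsubmx u 0 j * delta_mx ord_max ord_max j k =
    u 0 (lshift 2 ord_max) * (k == ord_max)%:R.
  rewrite (bigD1 ord_max) //= big1 ?addr0 => [|j /negbTE hj]; rewrite !mxE ?hj //=.
    by rewrite eqxx.
  by rewrite mulr0.
have E2 : \sum_j rsubmx u 0 j * Adl m (kp * xs 0 ord_max) j k =
    - (kp * xs 0 ord_max) * u 0 (rshift m.+1 1) * (k == ord_max)%:R.
  rewrite big_ord_recl big_ord1 !mxE /=.
  have -> : lift ord0 ord0 = 1 :> 'I_2 by apply: val_inj.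
  ring.
rewrite E1 E2; ring.
Qed.

Lemma vJR0 (u : 'rV[R]_(m.+1 + 2)) : (u *m Jcl) 0 (rshift m.+1 0) =
  - (eta * kp * z2) * u 0 (rshift m.+1 0) - (eta * kp * z1) * u 0 (rshift m.+1 1).
Proof.
rewrite -{1}[u]hsubmxK mul_row_block row_mxEr !mxE.
have E1 : \sum_j lsubmx u 0 j * Aur m theta j 0 = 0.
  by rewrite big1 // => j _; rewrite !mxE andbF mul0r mulr0.
rewrite E1 big_ord_recl big_ord1 !mxE /=.
have -> : lift ord0 ord0 = 1 :> 'I_2 by apply: val_inj.
ring.
Qed.

Lemma vJR1 (u : 'rV[R]_(m.+1 + 2)) : (u *m Jcl) 0 (rshift m.+1 1) =
  theta * u 0 (lshift 2 ord_max) - (eta * kp * z2) * u 0 (rshift m.+1 0)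
  - (eta * kp * z1) * u 0 (rshift m.+1 1).
Proof.
rewrite -{1}[u]hsubmxK mul_row_block row_mxEr !mxE.
have E1 : \sum_j lsubmx u 0 j * Aur m theta j 1 = theta * u 0 (lshift 2 ord_max).
  rewrite (bigD1 ord_max) //= big1 ?addr0 => [|j /negbTE hj]; rewrite !mxE ?hj //=.
    by rewrite eqxx mul1r mulrC.
  by rewrite mul0r mulr0.
rewrite E1 big_ord_recl big_ord1 !mxE /=.
have -> : lift ord0 ord0 = 1 :> 'I_2 by apply: val_inj.
ring.
Qed.

Lemma dF : differentiable F w.
Proof.
apply: diff_entries => i j; rewrite (ord1 i) -(splitK j); case: (fintype.split j) => [k|l] /=.
  by case: (dFL k).
by case: (l2 l) => ->; [case: dFR0 | case: dFR1].
Qed.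

Lemma jacF : 'J F w = Jcl.
Proof.
suff H : forall u, 'D_u F w = u *m Jcl.
  by apply/row_matrixP => i; rewrite !rowE -deriveEjacobian ?H //; exact: dF.
move=> u; apply/matrixP => i j; rewrite (ord1 i) derive_mx; last exact: diff_derivable dF.
rewrite mxE -(splitK j); case: (fintype.split j) => [k|l] /=.
  by have [dk dv] := dFL k; rewrite deriveE // dv vJL.
case: (l2 l) => ->.
  by have [dk dv] := dFR0; rewrite deriveE // dv vJR0.
by have [dk dv] := dFR1; rewrite deriveE // dv vJR1.
Qed.

End JacCL.


Section Final.
Variable R : realType.

Lemma mul_ecol p m (A : 'M[R]_(p, m.+1)) i : (A *m ecol R m.+1) i 0 = A i ord_max.
Proof.
rewrite mxE (bigD1 ord_max) //= mxE eqxx mulr1 big1 ?addr0 // => j hj.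
rewrite mxE eqSS; suff -> : (j == m :> nat) = false by rewrite mulr0.
by apply/negbTE; move: hj; rewrite -val_eqE.
Qed.

Lemma mul_ecolT q m (B : 'M[R]_(m.+1, q)) j : ((ecol R m.+1)^T *m B) 0 j = B ord_max j.
Proof.
rewrite mxE (bigD1 ord_max) //= !mxE eqxx mul1r big1 ?addr0 // => l hl.
rewrite !mxE eqSS; suff -> : (l == m :> nat) = false by rewrite mul0r.
by apply/negbTE; move: hl; rewrite -val_eqE.
Qed.

Lemma mul_SmxT q m (B : 'M[R]_(m.+1, q)) i j :
  ((Smx R m.+1)^T *m B) i j = B (widen_ord (leqnSn m) i) j.
Proof.
rewrite mxE (bigD1 (widen_ord (leqnSn m) i)) //= !mxE eqxx mul1r big1 ?addr0 // => l hl.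
rewrite !mxE; suff -> : (l == i :> nat) = false by rewrite mul0r.
by apply/negbTE; move: hl; rewrite -val_eqE.
Qed.

Lemma mul_Smx p m (A : 'M[R]_(p, m.+1)) i j :
  (A *m Smx R m.+1) i j = A i (widen_ord (leqnSn m) j).
Proof.
rewrite mxE (bigD1 (widen_ord (leqnSn m) j)) //= !mxE eqxx mulr1 big1 ?addr0 // => l hl.
rewrite !mxE; suff -> : (l == j :> nat) = false by rewrite mulr0.
by apply/negbTE; move: hl; rewrite -val_eqE.
Qed.

Lemma not_max m (j : 'I_m.+1) : j != ord_max ->
  exists j' : 'I_m, j = widen_ord (leqnSn m) j'.
Proof.
move=> hj; have hjm : (j < m)%N.
  by rewrite ltn_neqAle -ltnS ltn_ord andbT; move: hj; rewrite -val_eqE.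
by exists (Ordinal hjm); apply: val_inj.
Qed.

End Final.

Theorem mainTheorem16 (R : realType) (n : nat) (hn : (2 <= n)%N)
  (f : 'rV[R]_n -> 'rV[R]_n) (hf : C1 f)
  (b0 : 'rV[R]_n) (hb0 : forall i, 0 <= b0 0 i)
  (mu theta : R) (hmu : 0 < mu) (htheta : 0 < theta)
  (xstar : 'rV[R]_n) (ustar : R)
  (hxstar : forall i, 0 <= xstar 0 i) (hustar : 0 < ustar)
  (hxn : xlast xstar = mu / theta)
  (heq : f xstar - (ustar * (mu / theta)) *: (ecol R n)^T + b0 = 0)
  (hJ : hurwitz (jac f xstar))
  (hblk : (Smx R n)^T *m jac f xstar *m ecol R n = 0
          \/ (ecol R n)^T *m jac f xstar *m Smx R n = 0) :
  forall eta kp : R, 0 < eta -> 0 < kp ->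
    hurwitz (jac (closed_loop f b0 mu theta eta kp)
               (row_mx xstar (\row_(i < 2) nth 0 [:: mu / (eta * ustar);
                                                     ustar / kp] i))).
Proof.
move=> eta kp heta hkp.
move: hn f hf b0 hb0 xstar hxstar hxn heq hJ hblk.
case: n => [//|m] hn f hf b0 hb0 xstar hxstar hxn heq hJ hblk.
rewrite /jac (@jacF R m f b0 mu theta eta kp xstar (mu / (eta * ustar)) (ustar / kp) (hf.1 xstar)).
have hz2 : 0 < ustar / kp by apply: divr_gt0.
have hz1 : 0 < mu / (eta * ustar) by apply: divr_gt0 => //; apply: mulr_gt0.
have hxm : 0 < xstar 0 ord_max by rewrite -xlastE hxn; apply: divr_gt0.
apply/hurwitzE; apply: spectral.
- exact: mulr_gt0.
- exact: htheta.
- exact: mulr_gt0.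
- by apply: mulr_gt0 => //; apply: mulr_gt0.
- by apply: mulr_gt0 => //; apply: mulr_gt0.
- by move: hJ; rewrite /jac => /hurwitzE.
case: hblk => hb; [right|left] => j /not_max [j' ->].
  have := congr1 (fun M : 'M[R]_(m, 1) => M j' 0) hb; rewrite mul_ecol mul_SmxT /jac !mxE.
  by [].
have := congr1 (fun M : 'M[R]_(1, m) => M 0 j') hb; rewrite mul_Smx mul_ecolT /jac !mxE.
by [].
Qed.
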